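(* Let $\mathcal E$ be a nest on a complex Banach space $X$ and let $\Phi,\Theta$ be admissible support functions on $\mathcal E$ such that $\mathcal M(\Phi)=\mathcal M(\Theta)$. Then $\Phi(E)=\Theta(E)$ for every $E\in\mathcal E\setminus\{\{0\}\}$.
   Context: A nest $\mathcal E$ on $X$ is a family of closed linear subspaces of $X$, totally ordered by inclusion, containing $\{0\}$ and $X$, closed under arbitrary meets $\wedge$ (intersections) and joins $\vee$ (norm-closed linear spans of unions). For $E\in\mathcal E$, $E_-=\vee\{F\in\mathcal E: F\subsetneq E\}$. A support function on $\mathcal E$ is an inclusion-preserving map $\Phi:\mathcal E\to\mathcal E$; it is admissible if for every $N\in\mathcal E\setminus\{\{0\}\}$, $\vee_{E\in\mathcal E,E\subsetneq N}\Phi(E)=\Phi(N_-)$. For a support function $\Phi$, $\mathcal M(\Phi)=\{T\in\mathcal B(X): TE\subseteq\Phi(E)\ \forall E\in\mathcal E\}$. *)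

(* Defs.v *)
From HB Require Import structures.
From mathcomp Require Import all_boot all_order all_algebra.
From mathcomp Require Import all_classical all_reals all_analysis.
From mathcomp Require Import complex.
Set Implicit Arguments. Unset Strict Implicit. Unset Printing Implicit Defensive.
Import Order.TTheory GRing.Theory Num.Theory.
Import numFieldNormedType.Exports.
Local Open Scope classical_set_scope.
Local Open Scope ring_scope.

Section Nests.
Variables (K : numFieldType) (X : normedModType K).

Definition closed_subspace (E : set X) : Prop :=
  closed E /\ E 0 /\ (forall (a : K) (x y : X), E x -> E y -> E (a *: x + y)).

Definition cspan (A : set X) : set X :=
  \bigcap_(F in [set F | closed_subspace F /\ A `<=` F]) F.

Definition proper_sub (F E : set X) : Prop := F `<=` E /\ F <> E.

Definition is_nest (N : set (set X)) : Prop :=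
  (forall E, N E -> closed_subspace E) /\
  (forall E F, N E -> N F -> E `<=` F \/ F `<=` E) /\
  N [set 0] /\ N setT /\
  (forall S, S `<=` N -> N (\bigcap_(E in S) E)) /\
  (forall S, S `<=` N -> N (cspan (\bigcup_(E in S) E))).

Definition nest_minus (N : set (set X)) (E : set X) : set X :=
  cspan (\bigcup_(F in [set F | N F /\ proper_sub F E]) F).

Definition support_function (N : set (set X)) (Phi : set X -> set X) : Prop :=
  (forall E, N E -> N (Phi E)) /\
  (forall E F, N E -> N F -> E `<=` F -> Phi E `<=` Phi F).

Definition admissible (N : set (set X)) (Phi : set X -> set X) : Prop :=
  support_function N Phi /\
  forall N0, N N0 -> N0 <> [set 0] ->
    cspan (\bigcup_(E in [set E | N E /\ proper_sub E N0]) Phi E) = Phi (nest_minus N N0).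

(* bounded (= continuous) linear operators on X *)
Definition bounded_op (T : X -> X) : Prop :=
  (forall (a : K) (x y : X), T (a *: x + y) = a *: T x + T y) /\ continuous T.

Definition in_M (N : set (set X)) (Phi : set X -> set X) (T : X -> X) : Prop :=
  bounded_op T /\ forall E, N E -> T @` E `<=` Phi E.

End Nests.

(* Main.v *)
Require Import Defs.
From HB Require Import structures.
From mathcomp Require Import all_boot all_order all_algebra.
From mathcomp Require Import all_classical all_reals all_analysis.
From mathcomp Require Import complex.
Import Order.TTheory GRing.Theory Num.Theory.
Import numFieldNormedType.Exports.
Local Open Scope classical_set_scope.
Local Open Scope ring_scope.
From mathcomp Require Import ring lra.
Section RHB.
Variables (R : realType) (V : zmodType) (s : R -> V -> V) (p : V -> R).
Hypothesis sD : forall r x y, s r (x + y) = s r x + s r y.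
Hypothesis sDl : forall r q x, s (r + q) x = s r x + s q x.
Hypothesis sA : forall r q x, s r (s q x) = s (r * q) x.
Hypothesis s1 : forall x, s 1 x = x.
Hypothesis pD : forall x y, p (x + y) <= p x + p y.
Hypothesis pZ : forall r x, 0 < r -> p (s r x) = r * p x.

Definition glin (G : set (V * R)) := forall r x y a b, G (x,a) -> G (y,b) -> G (s r x + y, r * a + b).
Definition gfun (G : set (V * R)) := forall x a b, G (x,a) -> G (x,b) -> a = b.
Definition gdom (G : set (V * R)) := forall x a, G (x,a) -> a <= p x.

Lemma s0 x : s 0 x = 0.
Proof. by have := sDl 0 0 x; rewrite addr0 => h; apply: (addrI (s 0 x)); rewrite addr0 -h. Qed.

Lemma sr0 r : s r 0 = 0.
Proof. by have := sD r 0 0; rewrite addr0 => h; apply: (addrI (s r 0)); rewrite addr0 -h. Qed.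

Lemma sNr r x : s (- r) x = - s r x.
Proof. by apply/eqP; rewrite -addr_eq0 -sDl addNr s0. Qed.

Lemma sB r x y : s r (x - y) = s r x - s r y.
Proof.
have sN : s r (- y) = - s r y by apply/eqP; rewrite -addr_eq0 -sD addNr sr0.
by rewrite sD sN.
Qed.

Lemma sBl r q x : s (r - q) x = s r x - s q x.
Proof. by rewrite sDl sNr. Qed.

Theorem real_HB (G0 : set (V*R)) q0 : G0 q0 -> gfun G0 -> glin G0 -> gdom G0 ->
  exists U : V -> R, (forall r x y, U (s r x + y) = r * U x + U y) /\
    (forall x, U x <= p x) /\ (forall x a, G0 (x,a) -> U x = a).
Proof.
move=> G0q fG0 lG0 dG0.
pose P G := [/\ gfun G, glin G, gdom G & ((exists q, G q) -> G0 `<=` G)].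
have [|A [[fA lA dA A0] Amax]] := @Zorn_bigcup _ P.
  move=> F FP Ftot; split.
  - move=> x a b [G1 FG1 G1a] [G2 FG2 G2b].
    have [G12|G21] := Ftot _ _ FG1 FG2.
      by have [f _ _ _] := FP _ FG2; apply: f (G12 _ G1a) G2b.
    by have [f _ _ _] := FP _ FG1; apply: f G1a (G21 _ G2b).
  - move=> r x y a b [G1 FG1 G1a] [G2 FG2 G2b].
    have [G12|G21] := Ftot _ _ FG1 FG2.
      by have [_ l _ _] := FP _ FG2; exists G2 => //; apply: l (G12 _ G1a) G2b.
    by have [_ l _ _] := FP _ FG1; exists G1 => //; apply: l G1a (G21 _ G2b).
  - by move=> x a [G FG Ga]; have [_ _ d _] := FP _ FG; apply: d.
  - move=> [q [G FG Gq]] z G0z; exists G => //.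
    by have [_ _ _ h] := FP _ FG; apply: h => //; exists q.
have [[x0 a0] Ax0] : exists q, A q.
  apply: contrapT => nA; apply: (Amax G0); last by rewrite /P; split => // _ q.
  split; first by move=> q Aq; exfalso; apply: nA; exists q.
  by move=> G0A; apply: nA; exists q0; apply: G0A.
have G0A := A0 (ex_intro _ _ Ax0).
have A00 : A (0, 0).
  have := lA (-1) _ _ _ _ Ax0 Ax0; rewrite sNr s1 addNr mulN1r addNr //.
have full : forall z, exists a, A (z, a).
  move=> z; apply: contrapT => nz.
  have cross : forall d1 g1 d2 g2, A (d1,g1) -> A (d2,g2) ->
      g1 - p (d1 - z) <= p (d2 + z) - g2.
    move=> d1 g1 d2 g2 A1 A2.
    have := dA _ _ (lA 1 _ _ _ _ A1 A2); rewrite s1 mul1r => h.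
    have e : d1 - z + (d2 + z) = d1 + d2 by rewrite addrCA subrK addrC.
    have := pD (d1 - z) (d2 + z); rewrite e => h2; lra.
  pose S := [set t | exists d g, A (d,g) /\ t = g - p (d - z)].
  have hS : has_sup S.
    split; first by exists (0 - p (0 - z)); exists 0, 0.
    exists (p (0 + z) - 0) => t [d [g [Adg ->]]]; exact: cross.
  pose c := sup S.
  have Sc : forall d g, A (d,g) -> g - p (d - z) <= c.
    by move=> d g Adg; apply: sup_upper_bound => //; exists d, g.
  have cT : forall d g, A (d,g) -> c <= p (d + z) - g.
    move=> d g Adg; apply: ge_sup; first by case: hS.
    by move=> t [d' [g' [A' ->]]]; exact: cross.
  have Adiv : forall d g t, A (d,g) -> A (s t d, t * g).
    by move=> d g t Adg; have := lA t _ _ _ _ Adg A00; rewrite !addr0.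
  pose A' := [set q | exists d g r, A (d,g) /\ q = (d + s r z, g + r * c)].
  apply: (Amax A'); last split.
  - split; first by move=> [d g] Adg; exists d, g, 0; rewrite s0 mul0r !addr0.
    move=> A'A; have : A' (z, c) by exists 0, 0, 1; rewrite s1 mul1r !add0r.
    by move=> /A'A Azc; apply: nz; exists c.
  - move=> x a b [d1 [g1 [r1 [A1 [-> ->]]]]] [d2 [g2 [r2 [A2 []]]]].
    have [<-|rne] := eqVneq r1 r2.
      by move=> /addIr e1 ->; rewrite -e1 in A2; rewrite (fA _ _ _ A1 A2).
    move=> e _; exfalso; apply: nz.
    have e' : s (r1 - r2) z = d2 - d1.
      by rewrite sBl; apply/eqP; rewrite subr_eq addrAC -e [d1 + _]addrC addrK.
    have Ad : A (d2 - d1, - g1 + g2).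
      by have := lA (-1) _ _ _ _ A1 A2; rewrite sNr s1 mulN1r addrC.
    have := Adiv _ _ ((r1 - r2)^-1) Ad; rewrite -e' sA mulVf ?subr_eq0 // s1.
    by move=> h; eexists; apply: h.
  - move=> t x y a b [d1 [g1 [r1 [A1 [-> ->]]]]] [d2 [g2 [r2 [A2 [-> ->]]]]].
    exists (s t d1 + d2), (t * g1 + g2), (t * r1 + r2); split; first exact: lA.
    congr (_, _); last by rewrite mulrDr mulrDl mulrA; lra.
    by rewrite sD sA sDl; rewrite -!addrA; congr (_ + _); rewrite addrCA.
  - move=> x a [d [g [r [Adg [-> ->]]]]].
    have [r0|r0|->] := ltgtP r 0; last by rewrite s0 mul0r !addr0; apply: dA.
      pose t := - r.
      have t0 : 0 < t by rewrite /t oppr_gt0.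
      have := Sc _ _ (Adiv _ _ t^-1 Adg).
      have -> : s t^-1 d - z = s t^-1 (d + s r z).
        rewrite sD sA; congr (_ + _).
        by rewrite /t invrN mulNr mulVf ?lt_eqF // sNr s1.
      rewrite pZ ?invr_gt0 // => h.
      have := ler_wpM2l (ltW t0) h.
      rewrite mulrBr !mulrA mulfV ?gt_eqF // !mul1r /t; lra.
    have := cT _ _ (Adiv _ _ r^-1 Adg).
    have -> : s r^-1 d + z = s r^-1 (d + s r z).
      by rewrite sD sA mulVf ?gt_eqF // s1.
    rewrite pZ ?invr_gt0 // => h.
    have := ler_wpM2l (ltW r0) h.
    rewrite mulrBr !mulrA mulfV ?gt_eqF // !mul1r; lra.
  - by move=> _ [x' a'] /G0A Aq; exists x', a', 0; rewrite s0 mul0r !addr0.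
pose U x := xget 0 [set a | A (x, a)].
have UA x : A (x, U x) by exact: (@xgetPex _ 0 [set a | A (x, a)] (full x)).
exists U; split; last split.
- by move=> r x y; apply: fA (UA _) (lA _ _ _ _ _ (UA x) (UA y)).
- by move=> x; apply: dA (UA x).
- by move=> x a /G0A Axa; apply: fA (UA x) Axa.
Qed.
End RHB.

Lemma cplx_id (R : realType) (c : R[i]) (u v u' v' : R) :
  ((complex.Re c * u + complex.Im c * v + u')%:C - 'i * (- complex.Im c * u + complex.Re c * v + v')%:C =
  c * (u%:C - 'i * v%:C) + (u'%:C - 'i * v'%:C))%C.
Proof.
case: c => a b /=.
rewrite -!complexr0; simpc.
by apply/eqP; rewrite eq_complex /=; apply/andP; split; apply/eqP; ring.
Qed.

Lemma normCr (R : realType) (r : R) : `| (r%:C)%C | = (`|r|%:C)%C.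
Proof. by rewrite normc_def /= expr0n addr0 sqrtr_sqr. Qed.

Lemma normCi (R : realType) : `|'i%C| = 1 :> R[i].
Proof. by rewrite normc_def /= expr0n expr1n add0r sqrtr1. Qed.

Lemma ne0_lem (R : realType) (c : R) : ((1%:C - 'i * c%:C) : R[i])%C != 0.
Proof.
rewrite -!complexr0; simpc.
apply/eqP => /(congr1 (@complex.Re R)) /= /eqP; by rewrite oner_eq0.
Qed.

Section CHB.
Variables (R : realType) (X : normedModType R[i]).
Local Open Scope complex_scope.

Definition sc (r : R) (x : X) : X := r%:C *: x.
Definition nr (x : X) : R := complex.Re `|x|.

Lemma normE x : `|x| = (nr x)%:C.
Proof. by rewrite /nr RRe_real // normr_real. Qed.

Lemma nr_ge0 x : 0 <= nr x.
Proof. by rewrite -ler0c -normE. Qed.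

Lemma nrD x y : nr (x + y) <= nr x + nr y.
Proof. by have := ler_normD x y; rewrite !normE -raddfD lecR. Qed.

Lemma nrZ r x : nr (sc r x) = `|r| * nr x.
Proof. by have := normrZ (r%:C) x; rewrite !normE normCr -rmorphM => /complexI. Qed.

Lemma nrN x : nr (- x) = nr x.
Proof. by rewrite /nr normrN. Qed.

Lemma nri x : nr ('i *: x) = nr x.
Proof. by rewrite /nr normrZ normCi mul1r. Qed.

Lemma sepC (A : set X) (y : X) : closed_subspace A -> ~ A y ->
  exists F : X -> (R[i] : numFieldType), (forall a x z, F (a *: x + z) = a * F x + F z) /\
    continuous F /\ (forall a, A a -> F a = 0) /\ F y != 0.
Proof.
move=> [clA [A0 Alin]] nAy.
have AZ c x : A x -> A (c *: x) by move=> Ax; rewrite -[_ *: _]addr0; apply: Alin.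
have AD x z : A x -> A z -> A (x + z) by move=> Ax Az; rewrite -[x]scale1r; apply: Alin.
have [eps eps0 hb] : exists2 eps : R[i], 0 < eps & forall w, `|y - w| < eps -> ~ A w.
  have := closed_openC clA; rewrite openE => /(_ y nAy).
  by move=> /nbhs_normP [eps eps0 h]; exists eps => // w hw; apply: h.
pose e := complex.Re eps.
have epsE : eps = e%:C by rewrite /e RRe_real // gtr0_real.
have e0 : 0 < e by rewrite -ltcR -epsE.
have D a r : A a -> `|r| * e <= nr (a + sc r y).
  move=> Aa; have [->|r0] := eqVneq r 0; first by rewrite normr0 mul0r nr_ge0.
  have Aw : A (- sc r^-1 a) by rewrite /sc -scaleNr; apply: AZ.
  have := contra_not (hb _) (fun h : ~ A (- sc r^-1 a) => h Aw).
  have -> : y - - sc r^-1 a = sc r^-1 (a + sc r y).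
    by rewrite opprK /sc scalerDr scalerA -rmorphM mulVf // rmorph1 scale1r addrC.
  rewrite normE nrZ epsE ltcR => /negP; rewrite -leNgt => h.
  have := ler_wpM2l (normr_ge0 r) h.
  by rewrite mulrA -normrM mulfV // normr1 mul1r.
pose G0 := [set q | exists a r, A a /\ q = (a + sc r y, r)].
pose p x := nr x / e.
have sD r x z : sc r (x + z) = sc r x + sc r z by rewrite /sc scalerDr.
have sDl r q x : sc (r + q) x = sc r x + sc q x by rewrite /sc raddfD scalerDl.
have sA r q x : sc r (sc q x) = sc (r * q) x by rewrite /sc scalerA -rmorphM.
have s1 x : sc 1 x = x by rewrite /sc rmorph1 scale1r.
have s0 x : sc 0 x = 0 by rewrite /sc rmorph0 scale0r.
have pD x z : p (x + z) <= p x + p z.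
  by rewrite /p -mulrDl ler_wpM2r ?invr_ge0 ?(ltW e0) // nrD.
have pZ r x : 0 < r -> p (sc r x) = r * p x.
  by move=> r0; rewrite /p nrZ gtr0_norm // mulrA.
have G0q : G0 (0 + sc 0 y, 0) by exists 0, 0.
have fG0 : @gfun R X G0.
  move=> x a b [a1 [r1 [A1 [-> ->]]]] [a2 [r2 [A2 []]]] e12 ->.
  apply: contrapT => /eqP rne; apply: nAy.
  have e' : sc (r1 - r2) y = a2 - a1.
    rewrite /sc raddfB scalerBl; apply/eqP; rewrite subr_eq addrAC -[a2 + _]e12.
    by rewrite [a1 + _]addrC addrK.
  have Ad : A (a2 - a1) by rewrite addrC -scaleN1r; apply: Alin.
  have := AZ ((r1 - r2)^-1)%:C _ Ad; rewrite -e' /sc scalerA -rmorphM mulVf ?subr_eq0 //.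
  by rewrite rmorph1 scale1r.
have lG0 : @glin R X sc G0.
  move=> r x z a b [a1 [r1 [A1 [-> ->]]]] [a2 [r2 [A2 [-> ->]]]].
  exists (sc r a1 + a2), (r * r1 + r2); split; first by apply: AD => //; apply: AZ.
  congr (_, _); rewrite sD sA sDl; exact: addrACA.
have dG0 : @gdom R X p G0.
  move=> x a [a1 [r1 [A1 [-> ->]]]]; rewrite /p ler_pdivlMr //.
  by apply: le_trans (D _ _ A1); rewrite ler_wpM2r ?(ltW e0) // ler_norm.
have [U [Ulin [Ub UG0]]] := @real_HB R X sc p sD sDl sA s1 pD pZ G0 _ G0q fG0 lG0 dG0.
have UA a : A a -> U a = 0 by move=> Aa; apply: UG0; exists a, 0; rewrite s0 addr0.
have U0 : U 0 = 0 by apply: UA.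
have Uy : U y = 1 by apply: UG0; exists 0, 1; rewrite add0r s1.
have Uadd x z : U (x + z) = U x + U z by rewrite -{1}[x]s1 Ulin mul1r.
have UZr r x : U (sc r x) = r * U x by rewrite -[sc r x]addr0 Ulin U0 addr0.
have Ubz b x : U (b *: x) = complex.Re b * U x + complex.Im b * U ('i *: x).
  rewrite {1}(complexE b) scalerDl [_ * _]mulrC -scalerA Uadd.
  by rewrite -/(sc _ x) -/(sc _ ('i *: x)) !UZr.
have Un x : `|U x| <= p x.
  rewrite ler_norml Ub andbT lerNl -mulN1r -UZr.
  by apply: le_trans (Ub _) _; rewrite /p /sc rmorphN1 scaleN1r nrN.
have [F FE] : exists F : X -> (R[i] : numFieldType),
    forall x, F x = (U x)%:C - 'i * (U ('i *: x))%:C.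
  by exists (fun x => (U x)%:C - 'i * (U ('i *: x))%:C).
have Flin a x z : F (a *: x + z) = a * F x + F z.
  rewrite !FE scalerDr scalerA !Uadd (Ubz a) (Ubz ('i * a)) (mulrC 'i a) ReiNIm ImiRe.
  exact: cplx_id.
have F0 : F 0 = 0 by rewrite FE scaler0 U0 mulr0 subr0.
have FB x z : F x - F z = F (x - z).
  have := Flin (-1) z x; rewrite mulN1r scaleN1r => h.
  by rewrite [x - z]addrC h addrC.
have Fb w : `|F w| <= (2 / e)%:C * `|w|.
  rewrite FE; apply: le_trans (ler_normB _ _) _.
  rewrite normrM normCi mul1r !normCr -raddfD normE -rmorphM lecR.
  apply: le_trans (lerD (Un _) (Un _)) _; rewrite /p nri.
  by rewrite (_ : _ + _ = 2 / e * nr w) //; ring.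
exists F; split => //; split; last split.
- have k0 : 0 < (2 / e)%:C :> R[i] by rewrite ltcR divr_gt0.
  move=> x; apply/(@cvgrPdist_lt _ _ _ (nbhs x)) => eps' eps'0; near=> z.
  rewrite FB (le_lt_trans (Fb _)) // -ltr_pdivlMl //.
  near: z; apply: cvgr_dist_lt => //.
  apply: mulr_gt0; last exact: eps'0.
  rewrite invr_gt0. exact: k0.
- move=> a Aa; rewrite FE UA // UA; last exact: AZ.
  by rewrite rmorph0 mulr0 subr0.
- by rewrite FE Uy; apply: ne0_lem.
Unshelve. all: by end_near.
Qed.

End CHB.

Section Main.
Variables (R : realType) (X : completeNormedModType R[i]).

Lemma sep (A : set X) (y : X) : closed_subspace A -> ~ A y ->
  exists F : X -> (R[i] : numFieldType), (forall a x z, F (a *: x + z) = a * F x + F z) /\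
    continuous F /\ (forall a, A a -> F a = 0) /\ F y != 0.
Proof. exact: (@sepC R X A y). Qed.

Lemma cspan_min (A F : set X) : closed_subspace F -> A `<=` F -> cspan A `<=` F.
Proof. by move=> cF AF x; apply; split. Qed.

Lemma cspan_sup (A : set X) : A `<=` cspan A.
Proof. by move=> x Ax F [_ AF]; apply: AF. Qed.

Lemma cs0 (A : set X) : closed_subspace A -> A 0.
Proof. by case=> _ []. Qed.

Lemma csZ (A : set X) a x : closed_subspace A -> A x -> A (a *: x).
Proof. by case=> _ [A0 Al] Ax; rewrite -[_ *: _]addr0; apply: Al. Qed.

Variables (N : set (set X)) (Phi Theta : set X -> set X).
Hypothesis nN : is_nest N.
Hypothesis sPhi : support_function N Phi.
Hypothesis sTheta : support_function N Theta.
Hypothesis MM : forall T : X -> X, in_M N Phi T -> in_M N Theta T.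

Lemma nest_cs {E} : N E -> closed_subspace E.
Proof. by case: nN => h _; apply: h. Qed.

Lemma key (A B C : set X) (y x : X) : closed_subspace A -> N B -> B y -> ~ A y ->
  (forall G, N G -> ~ (G `<=` A) -> C `<=` G) -> N C -> Phi C x -> Theta B x.
Proof.
move=> cA NB By nAy hG NC Px.
have [F [Flin [Fc [FA Fy]]]] := @sep A y cA nAy.
pose T z := F z *: x.
have : in_M N Phi T.
  split.
    split; first by move=> a u v; rewrite /T Flin scalerDl scalerA.
    by move=> z; apply: continuousZr_tmp; apply: Fc.
  move=> G NG _ [z Gz <-]; rewrite /T.
  have cPG : closed_subspace (Phi G) by apply: nest_cs; case: sPhi => h _; apply: h.
  have [GA|nGA] := pselect (G `<=` A).
    by rewrite FA ?scale0r; [apply: cs0 | apply: GA].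
  apply: csZ => //; case: sPhi => _ h; apply: (h C G) => //; exact: hG.
move=> /MM [_ /(_ B NB (T y))] h.
have : Theta B (T y) by apply: h; exists y.
rewrite /T => ThB.
have cTB : closed_subspace (Theta B) by apply: nest_cs; case: sTheta => h' _; apply: h'.
have := @csZ _ (F y)^-1 _ cTB ThB; rewrite scalerA mulVf // scale1r //.
Qed.


Hypothesis aPhi : admissible N Phi.

Lemma tot {E F} : N E -> N F -> E `<=` F \/ F `<=` E.
Proof. by case: nN => _ [h _]; apply: h. Qed.

Lemma sub_main E : N E -> E <> [set 0] -> Phi E `<=` Theta E.
Proof.
move=> NE E0 x Px; apply: contrapT => nTx.
have cE := nest_cs NE.
have cTE : closed_subspace (Theta E) by apply: nest_cs; case: sTheta => h _; apply: h.
set Em := nest_minus N E.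
have NEm : N Em.
  by case: nN => _ [_ [_ [_ [_ h]]]]; apply: h => F [].
have EmE : Em `<=` E.
  by apply: cspan_min => // z [F [_ [FE _]]]; apply: FE.
have [EmeE|EmnE] := pselect (Em = E); last first.
  have [y [Ey nEmy]] : exists y, E y /\ ~ Em y.
    apply: contrapT => h; apply: EmnE; apply/seteqP; split => // z Ez.
    by apply: contrapT => nz; apply: h; exists z.
  apply: nTx; apply: (@key Em E E y x) => //; first exact: nest_cs.
  move=> G NG nGEm; case: (tot NG NE) => // GE.
  have [->//|GnE] := pselect (G = E).
  exfalso; apply: nGEm => z Gz; apply: cspan_sup; exists G => //.
have := aPhi.2 _ NE E0; rewrite -/Em EmeE => eq.
have [F [[NF PFE] [x' Px' nTx']]] : exists F, (N F /\ Defs.proper_sub F E) /\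
    exists2 x', Phi F x' & ~ Theta E x'.
  apply: contrapT => h; apply: nTx.
  move: Px; rewrite -eq; apply: cspan_min => // z [F FP Pz].
  by apply: contrapT => nz; apply: h; exists F; split => //; exists z.
case: PFE => FE FnE.
have [y [Ey nFy]] : exists y, E y /\ ~ F y.
  apply: contrapT => h; apply: FnE; apply/seteqP; split => // z Ez.
  by apply: contrapT => nz; apply: h; exists z.
apply: nTx'; apply: (@key F E F y x') => //; first exact: nest_cs.
by move=> G NG nGF; case: (tot NG NF).
Qed.

End Main.

Theorem mainTheorem4 (R : realType) (X : completeNormedModType R[i])
    (N : set (set X)) (Phi Theta : set X -> set X) :
  is_nest N -> admissible N Phi -> admissible N Theta ->
  (forall T : X -> X, in_M N Phi T <-> in_M N Theta T) ->
  forall E, N E -> E <> [set 0] -> Phi E = Theta E.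
Proof.
move=> nN [sP aP] [sT aT] MM E NE E0; apply/seteqP; split.
  apply: (@sub_main R X N Phi Theta nN sP sT _ (conj sP aP)) => // T /MM //.
apply: (@sub_main R X N Theta Phi nN sT sP _ (conj sT aT)) => // T /MM //.
Qed.
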